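(* Let $\theta_{OLS}\in\mathbb R$ and let $\{SB_0(\iota_0):\iota_0\in\mathcal I_0\}$ be a nonempty bounded set of real numbers indexed by a baseline information set $\mathcal I_0$; write $\underline s=\inf_{\iota_0\in\mathcal I_0}SB_0(\iota_0)$ and $\overline s=\sup_{\iota_0\in\mathcal I_0}SB_0(\iota_0)$. Let $\Lambda$ be the set of possible distributions of $SB_0(I_0)$, i.e. probability distributions supported on $\{SB_0(\iota_0):\iota_0\in\mathcal I_0\}$. For $\lambda\in\Lambda$ and a random variable $Z\sim\lambda$, let $SB_1(\lambda)$ be the optimal choice of $s\in\mathbb R$ for one of the following losses: (L1) $\mathbb E|s-Z|$, whose minimizer is a median of $\lambda$; (L2) $\big(\mathbb E[(s-Z)^2]\big)^{1/2}$, whose minimizer is the mean of $\lambda$; (L$\infty$) $\operatorname{ess\,sup}|s-Z|$, whose minimizer is the midpoint of the smallest closed interval containing the support of $\lambda$. Define $ATT_\lambda=\theta_{OLS}-SB_1(\lambda)$. Then for each of the three losses, $$\Big[\inf_{\lambda\in\Lambda}ATT_\lambda,\ \sup_{\lambda\in\Lambda}ATT_\lambda\Big]=\big[\theta_{OLS}-\overline s,\ \theta_{OLS}-\underline s\big].$$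
   Context: Background: in a two-period difference-in-differences setting, $\theta_{OLS}=\mathbb E[Y_1\mid D=1]-\mathbb E[Y_1\mid D=0]$ and $SB_0(\iota_0)=\mathbb E[Y_0\mid D=1,I_0=\iota_0]-\mathbb E[Y_0\mid D=0,I_0=\iota_0]$ is the baseline selection bias given information $\iota_0$. A decision maker picks the post-treatment selection bias $SB_1$ by minimizing a $p$-norm loss $\big(\mathbb E_{I_0}|SB_1-SB_0(I_0)|^p\big)^{1/p}$, $p\in\{1,2,\infty\}$, for a given distribution $\lambda$ of $SB_0(I_0)$; the interval $[\inf_\lambda ATT_\lambda,\sup_\lambda ATT_\lambda]$ is called the robust generalized DID bounds. *)

(* Defs.v *)
From HB Require Import structures.
From mathcomp Require Import all_boot all_order all_algebra.
From mathcomp Require Import all_classical all_reals all_analysis.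
Set Implicit Arguments. Unset Strict Implicit. Unset Printing Implicit Defensive.
Import Order.TTheory GRing.Theory Num.Theory.
Import numFieldNormedType.Exports.
Local Open Scope classical_set_scope.
Local Open Scope ring_scope.

(* Probability distributions on the Borel real line supported on the set S:
   the complement of S is P-negligible (S need not be measurable). *)
Definition supported_on (R : realType) (P : probability R R) (S : set R) : Prop :=
  {ae P, forall x, S x}.

Definition Lambda (R : realType) (I0 : Type) (SB0 : I0 -> R) : set (probability R R) :=
  [set P | supported_on P (range SB0)].

(* p-norm loss  (E |s - Z|^p)^(1/p)  (ess sup |s - Z| for p = +oo), Z ~ P. *)
Definition loss (R : realType) (p : \bar R) (P : probability R R) (s : R) : \bar R :=
  Lnorm P p (fun z => ((s - z)%R)%:E).

Definition is_optimal (R : realType) (p : \bar R) (P : probability R R) (s : R) : Prop :=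
  forall t : R, (loss p P s <= loss p P t)%E.

(* Main.v *)
Require Import Defs.
From HB Require Import structures.
From mathcomp Require Import all_boot all_order all_algebra.
From mathcomp Require Import all_classical all_reals all_analysis.
From mathcomp Require Import lra ess_sup_inf hoelder measurable_realfun.
Import Order.TTheory GRing.Theory Num.Theory.
Import numFieldNormedType.Exports.
Local Open Scope classical_set_scope.
Local Open Scope ring_scope.

Section Key.
Context (R : realType) (P : probability R R).
Local Open Scope ereal_scope.

Lemma key_oo (G H : R -> R) (c M : R) : (0 < c)%R -> (forall z, 0 <= G z)%R ->
  (\forall z \ae P, G z <= M /\ G z + c <= H z)%R ->
  ess_sup P (fun z => (G z)%:E) < ess_sup P (fun z => (H z)%:E).
Proof.
move=> c0 G0 hae.
have P1 : 0 < P setT by rewrite probability_setT.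
have hM : ess_sup P (fun z => (G z)%:E) <= M%:E.
  by apply/ess_supP; apply: filterS hae => z [+ _]; rewrite lee_fin.
have hc : c%:E <= ess_sup P (fun z => (H z)%:E).
  apply: ess_sup_gee => //; apply: filterS hae => z [_ h].
  by rewrite lee_fin; apply: le_trans h; rewrite lerDr G0.
case E: (ess_sup P (fun z => (H z)%:E)) => [r| |].
- have := ess_sup_ge P (fun z => (H z)%:E); rewrite E => hr.
  have : ess_sup P (fun z => (G z)%:E) <= (r - c)%:E.
    apply/ess_supP; apply: filterS2 hae hr => z [_ h1] h2.
    rewrite lee_fin in h2; have h3 := le_trans h1 h2; rewrite lee_fin; rewrite -lerBrDr in h3 || idtac; by [].
  move=> h; apply: le_lt_trans h _; rewrite lte_fin; lra.
- by apply: le_lt_trans hM _; exact: ltry.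
- by rewrite E in hc.
Qed.

Lemma key_int (G H : R -> R) (c M : R) : (0 <= M)%R ->
  measurable_fun setT G -> measurable_fun setT H ->
  (0 < c)%R -> (forall z, 0 <= G z)%R -> (forall z, 0 <= H z)%R ->
  (\forall z \ae P, G z <= M /\ G z + c <= H z)%R ->
  \int[P]_z (G z)%:E < \int[P]_z (H z)%:E.
Proof.
move=> M0 mG mH c0 G0 H0 hae.
have mGe : measurable_fun [set: R] (EFin \o G) by apply/measurable_EFinP.
have mHe : measurable_fun [set: R] (EFin \o H) by apply/measurable_EFinP.
have i1 : \int[P]_z ((G z)%:E + c%:E) <= \int[P]_z (H z)%:E.
  apply: ae_ge0_le_integral => //.
  - by move=> z _; rewrite adde_ge0 // lee_fin ?G0 ?ltW.
  - by apply: emeasurable_funD => //; exact: measurable_cst.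
  - by move=> z _; rewrite lee_fin.
  - by apply: filterS hae => z [_ h] _; rewrite -EFinD lee_fin.
have G0e : forall z, [set: R] z -> 0 <= (G z)%:E by move=> z _; rewrite lee_fin.
have c0e : forall z : R, [set: R] z -> 0 <= c%:E by move=> z _; rewrite lee_fin ltW.
rewrite (ge0_integralD P measurableT G0e mGe c0e (measurable_cst _)) in i1.
have ic : \int[P]_z c%:E = c%:E.
  rewrite (integral_cst P measurableT c%:E); rewrite -[RHS]mule1; congr (_ * _); exact: probability_setT.
rewrite ic in i1.
have i2 : \int[P]_z (G z)%:E <= M%:E.
  apply: (@le_trans _ _ (\int[P]_z M%:E)).
    apply: ae_ge0_le_integral => //; last first.
      by apply: filterS hae => z [h _] _; rewrite lee_fin.
    all: try (by move=> z _; rewrite lee_fin); try exact: measurable_cst.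
  rewrite (integral_cst P measurableT M%:E); suff -> : M%:E * P [set: R] = M%:E by []; rewrite -[RHS]mule1; congr (_ * _); exact: probability_setT.
have fin : \int[P]_z (G z)%:E \is a fin_num.
  rewrite ge0_fin_numE; first by apply: le_lt_trans i2 _; exact: ltry.
  by apply: integral_ge0 => z _; rewrite lee_fin.
apply: lt_le_trans i1; by rewrite lteDl // lte_fin.
Qed.

Lemma int_fin (G : R -> R) (M : R) : (0 <= M)%R ->
  measurable_fun setT G -> (forall z, 0 <= G z)%R ->
  (\forall z \ae P, G z <= M)%R ->
  \int[P]_z (G z)%:E \is a fin_num.
Proof.
move=> M0 mG G0 hae.
have mGe : measurable_fun [set: R] (EFin \o G) by apply/measurable_EFinP.
have i2 : \int[P]_z (G z)%:E <= M%:E.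
  apply: (@le_trans _ _ (\int[P]_z M%:E)).
    apply: ae_ge0_le_integral => //; last first.
      by apply: filterS hae => z h _; rewrite lee_fin.
    all: try (by move=> z _; rewrite lee_fin); try exact: measurable_cst.
  rewrite (integral_cst P measurableT M%:E); suff -> : M%:E * P [set: R] = M%:E by []; rewrite -[RHS]mule1; congr (_ * _); exact: probability_setT.
rewrite ge0_fin_numE; first by apply: le_lt_trans i2 _; exact: ltry.
by apply: integral_ge0 => z _; rewrite lee_fin.
Qed.

Lemma poweR_ltE (x y : \bar R) r : (0 < r)%R -> 0 <= x -> x < y ->
  x \is a fin_num -> x `^ r < y `^ r.
Proof.
move=> r0; case: x => // x x0 xy _.
case: y xy => [y| |] xy //.
- rewrite !poweR_EFin lte_fin; rewrite lee_fin in x0; rewrite lte_fin in xy.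
  apply: gt0_ltr_powR => //; rewrite nnegrE //.
  exact: le_trans x0 (ltW xy).
- by rewrite poweRyr ?gt_eqF // poweR_EFin; exact: ltry.
Qed.

Lemma keyL p (f1 f2 : R -> R) (c M : R) :
  (p = 1 \/ p = 2%:E \/ p = +oo) -> (0 <= M)%R ->
  measurable_fun setT f1 -> measurable_fun setT f2 -> (0 < c)%R ->
  (\forall z \ae P, `|f1 z| <= M /\ `|f1 z| + c <= `|f2 z|)%R ->
  Lnorm P p (fun z => (f1 z)%:E) < Lnorm P p (fun z => (f2 z)%:E).
Proof.
move=> hp M0 m1 m2 c0 hae.
have ma1 : measurable_fun setT (fun z => `|f1 z|)%R.
  exact: (measurableT_comp (@normr_measurable R setT) m1).
have ma2 : measurable_fun setT (fun z => `|f2 z|)%R.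
  exact: (measurableT_comp (@normr_measurable R setT) m2).
case: hp => [->|[->|->]].
- rewrite !Lnorm1.
  have := @key_int (fun z => `|f1 z|%R) (fun z => `|f2 z|%R) c M M0 ma1 ma2 c0 (fun z => normr_ge0 _) (fun z => normr_ge0 _) hae; by [].
- rewrite unlock /=.
  have e : forall f : R -> R, \int[P]_x (`|f x| `^ 2)%:E = \int[P]_x (`|f x| ^+ 2)%:E.
    by move=> f; apply: eq_integral => x _; rewrite (powR_mulrn 2 (normr_ge0 (f x))).
  rewrite !e.
  have mq1 : measurable_fun setT (fun z => `|f1 z| ^+ 2)%R by exact: measurable_funX.
  have mq2 : measurable_fun setT (fun z => `|f2 z| ^+ 2)%R by exact: measurable_funX.
  have hae2 : (\forall z \ae P, `|f1 z| ^+ 2 <= M ^+ 2 /\ `|f1 z| ^+ 2 + c ^+ 2 <= `|f2 z| ^+ 2)%R.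
    apply: filterS hae => z [h1 h2]; split.
      by rewrite lerXn2r // nnegrE ?normr_ge0.
    have n0 := normr_ge0 (f1 z).
    have : ((`|f1 z| + c) ^+ 2 <= `|f2 z| ^+ 2)%R.
      by rewrite lerXn2r // nnegrE ?normr_ge0 //; apply: addr_ge0 => //; exact: ltW.
    apply: le_trans; rewrite sqrrD; nra.
  apply: poweR_ltE.
  - by rewrite invr_gt0.
  - by apply: integral_ge0 => z _; rewrite lee_fin sqr_ge0.
  - have := @key_int (fun z => `|f1 z| ^+ 2)%R (fun z => `|f2 z| ^+ 2)%R (c ^+ 2) (M ^+ 2)
      (sqr_ge0 _) mq1 mq2 (exprn_gt0 _ c0) (fun z => sqr_ge0 _) (fun z => sqr_ge0 _) hae2.
    by [].
  - apply: (@int_fin (fun z => `|f1 z| ^+ 2)%R (M ^+ 2) (sqr_ge0 _) mq1 (fun z => sqr_ge0 _)).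
    by apply: filterS hae2 => z [].
- rewrite unlock /=.
  have P1 : (0 < P [set: R])%E by rewrite (probability_setT P).
  rewrite !ifT //.
  have := @key_oo (fun z => `|f1 z|%R) (fun z => `|f2 z|%R) c M c0 (fun z => normr_ge0 _) hae.
  by [].
Qed.

End Key.

Lemma dirac_ae (R : realType) (x : R) (Q : R -> Prop) : Q x ->
  {ae (\d_x : probability R R), forall z, Q z}.
Proof.
move=> Qx; exists [set z | z <> x]; split.
- exact: (measurableC (measurable_set1 x)).
- transitivity (\d_x [set z | z <> x] : \bar R); first by [].
  by rewrite diracE memNset.
- by move=> z nQ zx; apply: nQ; rewrite /= zx.
Qed.

Lemma bounds (R : realType) (P : probability R R) p (a b s : R) :
  (p = 1%E \/ p = 2%:E \/ p = +oo%E) ->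
  (\forall z \ae P, a <= z <= b) -> is_optimal p P s -> a <= s <= b.
Proof.
move=> hp hae opt.
have mc : forall y : R, measurable_fun setT (fun z : R => y - z).
  move=> y; apply: measurable_funB => //; exact: measurable_cst.
apply/andP; split.
- rewrite leNgt; apply/negP => sa.
  have h := @keyL R P p (fun z => a - z) (fun z => s - z) (a - s) `|b - a| hp
    (normr_ge0 _) (mc a) (mc s) (_ : 0 < a - s) _.
  have := opt a; rewrite /loss leNgt => /negP; apply; apply: h.
  + by rewrite subr_gt0.
  + apply: filterS hae => z /andP[h1 h2].
    have e1 : `|a - z| = z - a by rewrite distrC ger0_norm // subr_ge0.
    have e2 : `|s - z| = z - s.
      by rewrite distrC ger0_norm // subr_ge0; exact: le_trans (ltW sa) h1.
    have e3 : `|b - a| = b - a by rewrite ger0_norm // subr_ge0 (le_trans h1 h2).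
    rewrite e1 e2 e3; split; lra.
- rewrite leNgt; apply/negP => sb.
  have h := @keyL R P p (fun z => b - z) (fun z => s - z) (s - b) `|b - a| hp
    (normr_ge0 _) (mc b) (mc s) (_ : 0 < s - b) _.
  have := opt b; rewrite /loss leNgt => /negP; apply; apply: h.
  + by rewrite subr_gt0.
  + apply: filterS hae => z /andP[h1 h2].
    have e1 : `|b - z| = b - z by rewrite ger0_norm // subr_ge0.
    have e2 : `|s - z| = s - z.
      by rewrite ger0_norm // subr_ge0; exact: le_trans h2 (ltW sb).
    have e3 : `|b - a| = b - a by rewrite ger0_norm // subr_ge0 (le_trans h1 h2).
    rewrite e1 e2 e3; split; lra.
Qed.

Theorem lemma1 (R : realType) (I0 : Type) (SB0 : I0 -> R) (theta_OLS : R)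
  (p : \bar R) (SB1 : probability R R -> R) :
  (exists i : I0, True) ->
  has_ubound (range SB0) -> has_lbound (range SB0) ->
  (p = 1%E \/ p = 2%:E \/ p = +oo%E) ->
  (forall P, Lambda SB0 P -> is_optimal p P (SB1 P)) ->
  inf [set theta_OLS - SB1 P | P in Lambda SB0] = theta_OLS - sup (range SB0) /\
  sup [set theta_OLS - SB1 P | P in Lambda SB0] = theta_OLS - inf (range SB0).
Proof.
move=> [i _] hu hl hp hopt.
set S := range SB0.
set T := [set theta_OLS - SB1 P | P in Lambda SB0].
have Sne : S !=set0 by exists (SB0 i); exists i.
have hT : forall P, Lambda SB0 P -> inf S <= SB1 P <= sup S.
  move=> P hP; apply: (@bounds _ P p _ _ _ hp _ (hopt P hP)).
  have hP' : {ae P, forall z, S z} := hP.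
  apply: filterS hP' => z Sz; apply/andP; split.
    exact: ge_inf hl _ Sz.
  exact: ub_le_sup hu _ Sz.
have hD : forall j, T (theta_OLS - SB0 j).
  move=> j; have Sj : S (SB0 j) by exists j.
  exists (\d_(SB0 j)).
    by apply: (@dirac_ae _ (SB0 j) (fun z => S z)); exists j.
  have := @bounds _ _ p _ _ _ hp (@dirac_ae _ (SB0 j) (fun z => SB0 j <= z <= SB0 j) _)
    (hopt _ (@dirac_ae _ (SB0 j) (fun z => S z) Sj)).
  move=> h; have /andP[h1 h2] := h (introT andP (conj (lexx _) (lexx _))).
  by congr (_ - _); apply/eqP; rewrite eq_le h2 h1.
have hTb : forall y, T y -> theta_OLS - sup S <= y <= theta_OLS - inf S.
  move=> y [P hP <-]; have /andP[h1 h2] := hT P hP.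
  by apply/andP; split; lra.
have Tne : T !=set0 by exists (theta_OLS - SB0 i).
have Tl : has_lbound T by exists (theta_OLS - sup S) => y /hTb /andP[].
have Tu : has_ubound T by exists (theta_OLS - inf S) => y /hTb /andP[].
split.
- apply/eqP; rewrite eq_le; apply/andP; split.
  + have : sup S <= theta_OLS - inf T.
      apply: ge_sup => // y [j _ <-].
      have := ge_inf Tl (hD j); lra.
    lra.
  + by apply: lb_le_inf => // y /hTb /andP[].
- apply/eqP; rewrite eq_le; apply/andP; split.
  + by apply: ge_sup => // y /hTb /andP[].
  + have : theta_OLS - sup T <= inf S.
      apply: lb_le_inf => // y [j _ <-].
      have := ub_le_sup Tu (hD j); lra.
    lra.
Qed.
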